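(* Let $0\le h\le q-2$ and $\lambda_0,\lambda_1\in\mathbb{F}^\times$. For any $y\in A_\infty'$ with $|y|<p^{-h}$, the equation $\big(\mathrm{id}-\lambda_0\lambda_1^{-1}T_{K,0}^{-(q-1)h}\varphi_q\big)(x)=y$ has a unique solution $x\in A_\infty'$ with $|x|<p^{-h}$, given by the convergent series $x=\sum_{n\ge0}\big(\lambda_0\lambda_1^{-1}T_{K,0}^{-(q-1)h}\varphi_q\big)^n(y)$.
   Context: $p$ odd prime, $q=p^f$, $\mathbb{F}$ a finite extension of $\mathbb{F}_p$. Let $A_\infty'=\mathbb{F}((T_{K,0}^{1/p^\infty}))\big\langle\big(T_{K,i}/T_{K,0}^{p^i}\big)^{\pm1/p^\infty},1\le i\le f-1\big\rangle$ (the completed perfect ring obtained from $\mathbb{F}((T_{K,0}))\langle (T_{K,i}/T_{K,0}^{p^i})^{\pm1},1\le i\le f-1\rangle$ with its $T_{K,0}$-adic topology). Let $\varphi$ be the continuous $\mathbb{F}$-linear endomorphism of $A_\infty'$ with $\varphi(T_{K,i})=T_{K,i+1}$ for $0\le i\le f-1$, where $T_{K,f}:=T_{K,0}^q$ (compatibly on $p$-power roots), and $\varphi_q=\varphi^f$. Let $|\cdot|$ be the unique multiplicative norm on $A_\infty'$ inducing its topology with $|T_{K,0}|=p^{-1}$. *)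

(* Defs.v *)
From HB Require Import structures.
From mathcomp Require Import all_boot all_order all_algebra.
From mathcomp Require Import boolp classical_sets reals topology normedtype sequences exp.

Set Implicit Arguments.
Unset Strict Implicit.
Unset Printing Implicit Defensive.

Import Order.TTheory GRing.Theory Num.Theory.
Local Open Scope ring_scope.

(* Monomials are  T_{K,0}^{c_0} ... T_{K,f-1}^{c_{f-1}}  with exponents
   c_i in Z[1/p]; an exponent vector is a  seq rat  of size f.
   (Since T_{K,i} = (T_{K,i}/T_{K,0}^{p^i}) T_{K,0}^{p^i}, the T_{K,0}-adic
   order of such a monomial is its weight  sum_i p^i c_i.)
   An element of A'_infty is a coefficient function  c : seq rat -> F
   supported on exponent vectors of size f with entries in Z[1/p], such that
   for every bound N only finitely many monomials in the support have
   T_{K,0}-order < N (this is the T_{K,0}-adic completion of the perfection of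
   F((T_{K,0}))<(T_{K,i}/T_{K,0}^{p^i})^{+-1}>). *)

Section Ainf.
Variables (p f : nat) (F : fieldType).

Definition inZp (r : rat) : Prop := exists n : nat, (`|denq r| %| p ^ n)%N.

Definition wt (e : seq rat) : rat := \sum_(i < size e) (p ^ i)%:R * e`_i.

Definition inA (c : seq rat -> F) : Prop :=
  (forall e, c e != 0 -> size e = f /\ (forall r, r \in e -> inZp r)) /\
  (forall N : rat, exists s : seq (seq rat),
      forall e, c e != 0 -> wt e < N -> e \in s).

(* phi(T_i) = T_{i+1} (i < f-1), phi(T_{f-1}) = T_0^q: on exponents
   (c_0,...,c_{f-1}) |-> (q c_{f-1}, c_0, ..., c_{f-2}).  Its inverse: *)
Definition Minv (e : seq rat) : seq rat :=
  rcons (behead e) (head 0 e / (p ^ f)%:R).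

Definition phiA (c : seq rat -> F) : seq rat -> F :=
  fun e => if size e == f then c (Minv e) else 0.

Definition phiq (c : seq rat -> F) : seq rat -> F := iter f phiA c.

Definition mulT0 (k : int) (c : seq rat -> F) : seq rat -> F :=
  fun e => match e with
           | [::] => c [::]
           | a :: e' => c ((a - k%:~R) :: e')
           end.

Definition Uop (lam : F) (h : nat) (c : seq rat -> F) : seq rat -> F :=
  fun e => lam * mulT0 (- (((p ^ f).-1 * h)%N)%:Z) (phiq c) e.

(* Gauss norm: |x| = sup over the support of p^{-(T_0-order)}; |0| = 0 *)
Definition normA (R : realType) (c : seq rat -> F) : R :=
  sup [set (p%:R : R) `^ (- ratr (wt e)) | e in [set e | c e != 0]].

End Ainf.

(* Main.v *)
Require Import Defs.
From HB Require Import structures.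
From mathcomp Require Import all_boot all_order all_algebra.
From mathcomp Require Import boolp classical_sets reals topology normedtype sequences exp.
From mathcomp Require Import ring lra.
Import Order.TTheory GRing.Theory Num.Theory.
Import numFieldNormedType.Exports.
Local Open Scope classical_set_scope.
Local Open Scope ring_scope.

Lemma fin_preim (T U : eqType) (g : T -> U) (D : T -> Prop)
  (ginj : forall a b, D a -> D b -> g a = g b -> a = b) (s : seq U) :
  exists s' : seq T, forall e, D e -> g e \in s -> e \in s'.
Proof.
elim: s => [|u s [s0 Hs0]]; first by exists [::].
have [[e0 [De0 ge0]]|N] := pselect (exists e0, D e0 /\ g e0 = u).
  exists (e0 :: s0) => e De; rewrite inE => /orP[/eqP ge|ges].
    by rewrite inE (ginj e e0) // ?eqxx // ge ge0.
  by rewrite inE Hs0 ?orbT.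
exists s0 => e De; rewrite inE => /orP[/eqP ge|ges]; last exact: Hs0.
by exfalso; apply: N; exists e.
Qed.

Lemma fin_union (T : eqType) (P : nat -> T -> Prop) :
  (forall n, exists s : seq T, forall e, P n e -> e \in s) ->
  forall K, exists s : seq T, forall n e, (n < K)%N -> P n e -> e \in s.
Proof.
move=> H; elim=> [|K [s1 H1]]; first by exists [::].
have [s2 H2] := H K.
exists (s1 ++ s2) => n e; rewrite ltnS leq_eqVlt => /orP[/eqP->|nK] Pe.
  by rewrite mem_cat H2 ?orbT.
by rewrite mem_cat (H1 n).

Qed.

Lemma fmin_any (T : eqType) (s : seq T) (P : T -> Prop) (w : T -> rat) :
  exists m, forall e, e \in s -> P e -> m <= w e.
Proof.
elim: s => [|a s [m Hm]]; first by exists 0.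
exists (Num.min m (w a)) => e; rewrite inE => /orP[/eqP->|es] Pe.
  by rewrite ge_min lexx orbT.
by rewrite ge_min Hm.
Qed.

Lemma fmin_pos (T : eqType) (s : seq T) (P : T -> Prop) (w : T -> rat) :
  (forall e, e \in s -> P e -> 0 < w e) ->
  exists m, 0 < m /\ forall e, e \in s -> P e -> m <= w e.
Proof.
elim: s => [|a s IH] H; first by exists 1.
have [|m [m0 Hm]] := IH; first by move=> e es; apply: H; rewrite inE es orbT.
have [Pa|nPa] := pselect (P a).
  exists (Num.min m (w a)); split.
    by rewrite lt_min m0 H // inE eqxx.
  move=> e; rewrite inE => /orP[/eqP->|es] Pe.
    by rewrite ge_min lexx orbT.
  by rewrite ge_min Hm.
exists m; split => // e; rewrite inE => /orP[/eqP->|es] Pe //.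
by apply: Hm.
Qed.

Lemma sum_stab (V : zmodType) (g : nat -> V) M M' :
  (forall n, (M <= n)%N -> g n = 0) -> (M <= M')%N ->
  \sum_(n < M') g n = \sum_(n < M) g n.
Proof.
move=> H; elim: M' => [|M' IH]; first by rewrite leqn0 => /eqP->.
rewrite leq_eqVlt => /orP[/eqP->//|]; rewrite ltnS => MM.
by rewrite big_ord_recr /= H // addr0 IH.
Qed.

Lemma sum_nz (V : zmodType) (g : nat -> V) M :
  \sum_(n < M) g n != 0 -> exists n, (n < M)%N /\ g n != 0.
Proof.
move=> H; apply: contrapT => N; move: H; rewrite big1 ?eqxx // => i _.
apply/eqP; apply: contrapT => gi; apply: N; exists i; split => //.
by apply/negP.
Qed.

Lemma inZpP (p : nat) (r : rat) :
  Defs.inZp p r <-> exists n, r * (p ^ n)%:R \is a Num.int.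
Proof.
split.
  move=> [n /dvdnP[m Hm]]; exists n.
  have -> : r = (numq r)%:~R / (denq r)%:~R by rewrite divq_num_den.
  have hd : (denq r)%:~R = (`|denq r|%N)%:R :> rat.
    by case: (denq r) (denq_gt0 r).
  rewrite Hm natrM hd.
  have hd0 : (`|denq r|%N)%:R != 0 :> rat by rewrite -hd intr_eq0 denq_neq0.
  rewrite mulrCA mulfVK //.
  by rewrite rpredM ?natr_int ?intr_int.
move=> [n /intrP [z Hz]]; exists n.
have e1 : (numq r * (p ^ n)%N%:Z = z * denq r)%R.
  apply: (@intr_inj rat); rewrite !intrM numqE -Hz -!mulrA; congr (_ * _); exact: mulrC.
have e2 := congr1 absz e1; rewrite !abszM /= in e2.
have : (`|denq r| %| `|numq r| * p ^ n)%N by rewrite e2 dvdn_mull.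
by rewrite Gauss_dvdr // coprime_sym coprime_num_den.
Qed.

Lemma inZp_mulnat p r m : (m != 0)%N -> Defs.inZp p (r / m%:R) -> Defs.inZp p r.
Proof.
move=> m0 /inZpP [n Hn]; apply/inZpP; exists n.
have -> : r * (p ^ n)%:R = (r / m%:R * (p ^ n)%:R) * m%:R.
  by field; rewrite pnatr_eq0.
by rewrite rpredM ?natr_int.
Qed.

Lemma inZp_addint p r (k : int) : Defs.inZp p (r - k%:~R) -> Defs.inZp p r.
Proof.
move/inZpP=> [n Hn]; apply/inZpP; exists n.
have -> : r * (p ^ n)%:R = (r - k%:~R) * (p ^ n)%:R + k%:~R * (p ^ n)%:R.
  by ring.
by rewrite rpredD // rpredM ?natr_int ?intr_int.
Qed.

Section Op.
Variables (p f : nat) (F : fieldType) (h : nat) (lam : F).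
Hypotheses (pp : prime p) (f0 : (0 < f)%N).

Definition qq : rat := (p ^ f)%:R.
Definition kk : int := - (((p ^ f).-1 * h)%N)%:Z.
Definition Sm (e : seq rat) : seq rat :=
  match e with [::] => [::] | a :: e' => iter f (Minv p f) ((a - kk%:~R) :: e') end.

Lemma p0 : (0 < p)%N. Proof. exact: prime_gt0. Qed.
Lemma pr0 : (p%:R : rat) != 0. Proof. by rewrite pnatr_eq0 -lt0n p0. Qed.
Lemma qq0 : qq != 0. Proof. by rewrite /qq pnatr_eq0 -lt0n expn_gt0 p0. Qed.

Lemma size_Minv e : e != [::] -> size (Minv p f e) = size e.
Proof. by case: e => // a e _; rewrite /Minv /= size_rcons. Qed.

Lemma size_iterMinv n e : e != [::] -> size (iter n (Minv p f) e) = size e.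
Proof.
elim: n => // n IH ne; rewrite iterS size_Minv ?IH //.
by rewrite -size_eq0 IH // size_eq0.
Qed.

Lemma iter_phiA n (g : seq rat -> F) e : size e = f ->
  iter n (@phiA p f F) g e = g (iter n (Minv p f) e).
Proof.
elim: n e => // n IH e se.
rewrite iterS /phiA se eqxx IH ?iterSr // size_Minv ?se //.
by rewrite -size_eq0 se -lt0n.
Qed.

Lemma phiq_out (g : seq rat -> F) e : size e != f -> phiq p f g e = 0.
Proof.
move=> se; rewrite /phiq; case: f f0 se => // f' _ se.
by rewrite iterS /phiA (negPf se).
Qed.

Lemma Ueq g e : Uop p f lam h g e = if size e == f then lam * g (Sm e) else 0.
Proof.
rewrite /Uop /mulT0; case: e => [|a e] /=.
  have fn : (0 == f) = false by case: (f) f0.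
  by rewrite phiq_out ?mulr0 ?fn // eq_sym fn.
case: eqP => se.
  by rewrite /phiq iter_phiA.
by rewrite phiq_out ?mulr0 //; apply/eqP.
Qed.

Lemma wt_cons a e : wt p (a :: e) = a + p%:R * wt p e.
Proof.
rewrite /wt big_ord_recl /= expn0 mul1r; congr (_ + _).
rewrite mulr_sumr; apply: eq_bigr => i _.
by rewrite /bump /= expnS natrM mulrA.
Qed.

Lemma wt_rcons e b : wt p (rcons e b) = wt p e + (p ^ size e)%:R * b.
Proof.
rewrite /wt size_rcons big_ord_recr /= nth_rcons ltnn eqxx; congr (_ + _).
by apply: eq_bigr => i _; rewrite nth_rcons ltn_ord.
Qed.

Lemma wt_Minv e : size e = f -> wt p (Minv p f e) = wt p e / p%:R.
Proof.
case: e => [|a e] /=; first by move=> f00; move: f0; rewrite -f00.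
move=> se; rewrite /Minv /= wt_rcons wt_cons.
have fe : f = (size e).+1 by [].
rewrite fe expnS natrM.
have := pr0; have : ((p ^ size e)%:R : rat) != 0 by rewrite pnatr_eq0 -lt0n expn_gt0 p0.
move=> H1 H2; field; apply/andP; split => //.
Qed.

Lemma wt_iterMinv n e : size e = f ->
  wt p (iter n (Minv p f) e) = wt p e / (p%:R) ^+ n.
Proof.
move=> se; elim: n => [|n IH]; first by rewrite expr0 divr1.
have ne : e != [::] by rewrite -size_eq0 se -lt0n.
rewrite iterS wt_Minv ?size_iterMinv // IH exprS.
have := pr0 => H; have : ((p%:R : rat) ^+ n) != 0 by rewrite expf_neq0.
by move=> H2; field; apply/andP.
Qed.

Lemma kkE : kk%:~R = - (qq - 1) * h%:R :> rat.
Proof.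
rewrite /kk /qq mulrNz -pmulrn natrM.
have : (0 < p ^ f)%N by rewrite expn_gt0 p0.
by case: (p ^ f)%N => // m _ /=; rewrite -addn1 natrD; ring.
Qed.

Lemma wt_Sm e : size e = f -> wt p e - h%:R = qq * (wt p (Sm e) - h%:R).
Proof.
case: e => [|a e] se; first by move: f0; rewrite -se.
rewrite /Sm wt_iterMinv // !wt_cons kkE -natrX.
have := qq0; rewrite /qq => H.
by field.
Qed.

Lemma Minv_inj a b : a != [::] -> b != [::] -> Minv p f a = Minv p f b -> a = b.
Proof.
case: a => // x a _; case: b => // y b _; rewrite /Minv /=.
move/rcons_inj => [-> H]; congr (_ :: _).
have := qq0; rewrite /qq => H0.
by apply: (mulIf (invr_neq0 H0)).
Qed.

Lemma iterMinv_inj n a b : a != [::] -> b != [::] ->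
  iter n (Minv p f) a = iter n (Minv p f) b -> a = b.
Proof.
elim: n a b => // n IH a b na nb; rewrite !iterSr => /IH H.
apply: Minv_inj => //; apply: H; by rewrite -size_eq0 size_Minv // size_eq0.
Qed.

Lemma Sm_inj a b : size a = f -> size b = f -> Sm a = Sm b -> a = b.
Proof.
case: a => [|x a]; first by move=> se; move: f0; rewrite -se.
case: b => [|y b]; first by move=> _ se; move: f0; rewrite -se.
move=> _ _ /= E; have [] := @iterMinv_inj f (x - kk%:~R :: a) (y - kk%:~R :: b) isT isT E.
by move=> /addIr -> ->.
Qed.

Lemma Minv_inZp e : e != [::] -> (forall r, r \in Minv p f e -> Defs.inZp p r) ->
  forall r, r \in e -> Defs.inZp p r.
Proof.
case: e => // a e _ H r; rewrite inE => /orP[/eqP->|re].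
  apply: (@inZp_mulnat p a (p ^ f)%N); first by rewrite -lt0n expn_gt0 p0.
  by apply: H; rewrite /Minv /= mem_rcons inE eqxx.
by apply: H; rewrite /Minv /= mem_rcons inE re orbT.
Qed.

Lemma Sm_inZp e : size e = f -> (forall r, r \in Sm e -> Defs.inZp p r) ->
  forall r, r \in e -> Defs.inZp p r.
Proof.
case: e => [|a e]; first by move=> se; move: f0; rewrite -se.
move=> _ /=.
have : forall n e', e' != [::] -> (forall r, r \in iter n (Minv p f) e' -> Defs.inZp p r) ->
  forall r, r \in e' -> Defs.inZp p r.
  elim=> [//|n IH] e' ne' H; apply: Minv_inZp => //; apply: IH; last by rewrite -iterSr.
  by rewrite -size_eq0 size_Minv // size_eq0.
move=> G H r; have {}H := G f (a - kk%:~R :: e) isT H.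
rewrite inE => /orP[/eqP->|re].
  by apply: (@inZp_addint _ _ kk); apply: H; rewrite inE eqxx.
by apply: H; rewrite inE re orbT.
Qed.

Lemma qq2 : 2 <= qq.
Proof.
rewrite /qq (ler_nat rat 2); case: f f0 => // f' _; rewrite expnS.
by rewrite -[2%N]muln1 leq_mul ?prime_gt1 ?expn_gt0 ?p0.
Qed.

Lemma qq_gt0 : 0 < qq.
Proof. by apply: lt_le_trans qq2. Qed.

Lemma iterU_S n g e : iter n.+1 (Uop p f lam h) g e =
  if size e == f then lam * iter n (Uop p f lam h) g (Sm e) else 0.
Proof. by rewrite iterS Ueq. Qed.

Lemma ifnz (b : bool) (a : F) : (if b then lam * a else 0) != 0 -> b /\ a != 0.
Proof.
by case: b => //; rewrite ?eqxx // mulf_eq0 negb_or => /andP[].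
Qed.

Lemma grow (g : nat -> seq rat -> F) (d : rat) : 0 < d ->
  (forall e, g 0%N e != 0 -> h%:R + d <= wt p e) ->
  (forall n e, g n.+1 e != 0 -> size e = f /\ g n (Sm e) != 0) ->
  forall n e, g n e != 0 -> n.+1%:R * d <= wt p e - h%:R.
Proof.
move=> d0 H0 HS; elim=> [|n IH] e ge.
  by rewrite mul1r; have := H0 e ge; lra.
have [se gS] := HS n e ge; rewrite (@wt_Sm e se).
have := IH _ gS; have := qq2.
have : 1 <= n.+1%:R :> rat by rewrite ler1n.
rewrite !mulrSr => h1 h2 h3.
set W := wt p (Sm e) - h%:R in h3 *.
have h5 : 0 <= n%:R * d by apply: mulr_ge0; [exact: ler0n | exact: ltW].
have hW : 0 <= W by apply: le_trans h3; apply: mulr_ge0; [lra | exact: ltW].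
have h6 : 2 * W <= qq * W by apply: ler_wpM2r.
lra.
Qed.

End Op.

Lemma archi_M (W dm : rat) : 0 < dm ->
  exists M, forall n, (M <= n)%N -> W < n.+1%:R * dm.
Proof.
move=> d0; exists (Num.Def.archi_bound `|W / dm|) => n Mn.
have H := archi_boundP (normr_ge0 (W / dm)).
have H1 : W / dm < (Num.Def.archi_bound `|W / dm|)%:R := le_lt_trans (ler_norm _) H.
rewrite ltr_pdivrMr // in H1.
apply: lt_le_trans H1 _; apply: ler_wpM2r; first exact: ltW.
by rewrite ler_nat ltnW.
Qed.

Lemma archi_contra (W dm : rat) : 0 < dm -> (forall n, n.+1%:R * dm <= W) -> False.
Proof.
move=> d0 H; have [M HM] := @archi_M W dm d0.
by have := HM M (leqnn _); rewrite ltNge H.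
Qed.

Section Norm.
Variables (p : nat) (F : fieldType) (R : realType).
Hypothesis pp : prime p.

Lemma p1R : 1 <= (p%:R : R).
Proof. by rewrite ler1n prime_gt0. Qed.

Lemma normA_bnd (c : seq rat -> F) (W : rat) :
  (forall e, c e != 0 -> W <= wt p e) ->
  [/\ 0 <= normA p R c, normA p R c <= (p%:R : R) `^ (- ratr W) &
      forall e, c e != 0 -> (p%:R : R) `^ (- ratr (wt p e)) <= normA p R c].
Proof.
move=> HW.
set E := [set (p%:R : R) `^ (- ratr (wt p e)) | e in [set e | c e != 0]].
have ub : ubound E ((p%:R : R) `^ (- ratr W)).
  move=> _ [e /= ce <-]; apply: ler_powR; first exact: p1R.
  by rewrite lerN2 ler_rat HW.
have [[e0 ce0]|N] := pselect (exists e, c e != 0).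
  have ne : E !=set0 by exists ((p%:R : R) `^ (- ratr (wt p e0))); exists e0.
  have hs : has_sup E by split => //; exists ((p%:R : R) `^ (- ratr W)).
  have up : forall e, c e != 0 -> (p%:R : R) `^ (- ratr (wt p e)) <= normA p R c.
    by move=> e ce; apply: sup_upper_bound => //; exists e.
  split => //; first exact: le_trans (powR_ge0 _ _) (up e0 ce0).
  exact: ge_sup.
have E0 : E = set0.
  by apply/seteqP; split => // x [e ce _]; exfalso; apply: N; exists e.
rewrite /normA -/E E0 sup0; split => //; first exact: powR_ge0.
by move=> e ce; exfalso; apply: N; exists e.
Qed.

Lemma powh (h : nat) : (p%:R : R) `^ (- ratr (h%:R : rat)) = (p%:R)^-h.
Proof. by rewrite powRN ratr_nat powR_mulrn // ler0n. Qed.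

Lemma powR_gt1 (d : rat) : 0 < d -> 1 < (p%:R : R) `^ (ratr d).
Proof.
move=> d0; rewrite lt_neqAle; apply/andP; split.
  rewrite eq_sym powR_eq1 pnatr_eq1 ltNge ler0n /=.
  rewrite (gtn_eqF (prime_gt1 pp)) /= -(rmorph0 (@ratr R)) (inj_eq (fmorph_inj _)).
  by rewrite gt_eqF.
rewrite -{1}(powRr0 (p%:R : R)); apply: ler_powR; first exact: p1R.
by rewrite -(rmorph0 (@ratr R)) ler_rat ltW.
Qed.

Lemma gap (f h : nat) (c : seq rat -> F) : inA p f c ->
  normA p R c < (p%:R : R) ^- h ->
  exists d : rat, 0 < d /\ forall e, c e != 0 -> h%:R + d <= wt p e.
Proof.
move=> [_ Hfin] Hn; have [s Hs] := Hfin (h%:R + 1).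
have [m Hm] := fmin_any _ s (fun e => c e != 0) (wt p).
have HW : forall e, c e != 0 -> Num.min m (h%:R + 1) <= wt p e.
  move=> e ce; case: (ltP (wt p e) (h%:R + 1)) => H.
    by rewrite ge_min Hm ?Hs.
  by rewrite ge_min H orbT.
have [_ _ up] := @normA_bnd c _ HW.
have gt : forall e, c e != 0 -> h%:R < wt p e.
  move=> e ce; rewrite ltNge; apply/negP => le; have H2 := up e ce.
  have H1 : (p%:R : R) ^- h <= (p%:R : R) `^ (- ratr (wt p e)).
    by rewrite -powh; apply: ler_powR; [exact: p1R | rewrite lerN2 ler_rat].
  by have := le_lt_trans (le_trans H1 H2) Hn; rewrite ltxx.
have [|d [d0 Hd]] := fmin_pos _ s (fun e => c e != 0) (fun e => wt p e - h%:R).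
  by move=> e _ ce; rewrite subr_gt0; exact: gt.
exists (Num.min d 1); split; first by rewrite lt_min d0 ltr01.
move=> e ce; case: (ltP (wt p e) (h%:R + 1)) => H.
  apply: le_trans (_ : h%:R + d <= _); first by rewrite lerD2l ge_min lexx.
  by have := Hd e (Hs e ce H) ce; lra.
by apply: le_trans H; rewrite lerD2l ge_min lexx orbT.
Qed.

End Norm.

Section Main.
Variables (p f : nat) (F : fieldType) (R : realType) (h : nat) (lam : F).
Variables (y : seq rat -> F) (d : rat).
Hypotheses (pp : prime p) (f0 : (0 < f)%N) (Hy : inA p f y) (d0 : 0 < d)
  (Hd : forall e, y e != 0 -> h%:R + d <= wt p e).

Let U := Uop p f lam h.
Let Y n := iter n U y.

Lemma YG n e : Y n e != 0 -> n.+1%:R * d <= wt p e - h%:R.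
Proof.
apply: (@grow p f F h pp f0 (fun n e => Y n e) d d0) => //.
move=> m e' /=; rewrite /Y /U Ueq //; by case/ifnz => /eqP.
Qed.

Lemma YV e : exists M, forall n, (M <= n)%N -> Y n e = 0.
Proof.
have [M HM] := @archi_M (wt p e - h%:R) d d0; exists M => n Mn.
apply/eqP; apply: contraT => Yn; have := YG _ _ Yn.
by rewrite leNgt HM.
Qed.

Definition Bd e := xget 0%N (fun M => forall n, (M <= n)%N -> Y n e = 0).

Lemma BP e n : (Bd e <= n)%N -> Y n e = 0.
Proof. by move: n; apply: (xgetPex 0%N (YV e)). Qed.

Definition xx e := \sum_(n < Bd e) Y n e.

Lemma XS e M : (forall n, (M <= n)%N -> Y n e = 0) -> xx e = \sum_(n < M) Y n e.
Proof.
move=> HM; rewrite /xx.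
rewrite -(@sum_stab _ (fun n => Y n e) (Bd e) (maxn (Bd e) M)) ?leq_maxl //; last exact: BP.
by rewrite (@sum_stab _ (fun n => Y n e) M) ?leq_maxr.
Qed.

Lemma Xeq : (fun e => xx e - U xx e) = y.
Proof.
apply: funext => e; have [se|se] := eqVneq (size e) f.
  set M := maxn (Bd e) (Bd (Sm p f h e)).
  rewrite (@XS e M.+1); last by move=> n Mn; apply: BP; apply: leq_trans (leq_maxl _ _) (ltnW Mn).
  rewrite /U Ueq // se eqxx (@XS (Sm p f h e) M); last first.
    by move=> n Mn; apply: BP; apply: leq_trans (leq_maxr _ _) Mn.
  rewrite big_ord_recl mulr_sumr /=.
  have -> : \sum_(i < M) Y (bump 0 i) e = \sum_(i < M) lam * Y i (Sm p f h e).
    by apply: eq_bigr => i _; rewrite /Y /U /bump /= Ueq // se eqxx.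
  by rewrite addrK.
rewrite /U Ueq // (negPf se) subr0 (@XS e 1%N) ?big_ord1 //.
by case=> // n _; rewrite /Y iterU_S // (negPf se).
Qed.

Lemma XZ e : xx e != 0 -> exists n, Y n e != 0.
Proof. by rewrite /xx => /(@sum_nz _ (fun n => Y n e)) [n [_ Hn]]; exists n. Qed.

Lemma Xgap e : xx e != 0 -> h%:R + d <= wt p e.
Proof.
move/XZ=> [n /YG Hn]; have : d <= n.+1%:R * d by apply: ler_peMl; [exact: ltW | rewrite ler1n].
lra.
Qed.

Lemma YZ n e : Y n e != 0 -> size e = f /\ forall r, r \in e -> Defs.inZp p r.
Proof.
elim: n e => [|n IH] e; first exact: Hy.1.
rewrite /Y iterU_S // => /ifnz [/eqP se /IH [_ H]]; split => //.
exact: (@Sm_inZp p f h pp f0 e se H).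
Qed.

Lemma finY n N : exists s : seq (seq rat), forall e, Y n e != 0 -> wt p e < N -> e \in s.
Proof.
elim: n N => [|n IH] N; first exact: Hy.2.
have [s Hs] := IH (h%:R + (N - h%:R) / qq p f).
have [s' Hs'] := @fin_preim _ _ (Sm p f h) (fun e => size e = f) (@Sm_inj p f h pp f0) s.
exists s' => e; rewrite /Y iterU_S // => /ifnz [/eqP se gS] wN.
apply: Hs' => //; apply: Hs => //.
have : wt p (Sm p f h e) - h%:R < (N - h%:R) / qq p f.
  rewrite ltr_pdivlMr ?qq_gt0 // mulrC -wt_Sm //; lra.
lra.
Qed.

Lemma XinA : inA p f xx.
Proof.
split.
  by move=> e /XZ [n /YZ].
move=> N; have [K HK] := @archi_M (N - h%:R) d d0.
have HF : forall n, exists s : seq (seq rat), forall e, (Y n e != 0 /\ wt p e < N) -> e \in s.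
  by move=> n; have [s Hs] := finY n N; exists s => e [H1 H2]; exact: Hs.
have [s Hs] := @fin_union _ (fun n e => Y n e != 0 /\ wt p e < N) HF K.
exists s => e /XZ [n Yn] wN; apply: (Hs n) => //.
rewrite ltnNge; apply/negP => /HK; have := YG _ _ Yn; lra.
Qed.

Lemma Xtail N e : xx e - \sum_(n < N) Y n e != 0 -> h%:R + N.+1%:R * d <= wt p e.
Proof.
apply: contraTT; rewrite -ltNge => wl.
rewrite (@XS e N) ?subrr ?eqxx // => n Nn; apply/eqP; apply: contraT => Yn.
have := YG _ _ Yn; have : N.+1%:R * d <= n.+1%:R * d.
  by apply: ler_wpM2r; [exact: ltW | rewrite ler_nat].
lra.
Qed.

Lemma pn0 : (p%:R : R) != 0.
Proof. by rewrite pnatr_eq0 gtn_eqF ?prime_gt0. Qed.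

Lemma r_lt1 (dd : rat) : 0 < dd -> `|(p%:R : R) `^ (- ratr dd)| < 1.
Proof.
move=> dd0; rewrite ger0_norm ?powR_ge0 // powRN invf_lt1 ?powR_gt0 ?ltr0n ?prime_gt0 //.
exact: powR_gt1.
Qed.

Lemma Xnorm : normA p R xx < (p%:R : R) ^- h.
Proof.
have [_ Hb _] := @normA_bnd p F R pp xx (h%:R + d) Xgap.
apply: le_lt_trans Hb _.
rewrite rmorphD /= opprD powRD; last by rewrite pn0 implybT.
rewrite powh // gtr_pMr; last by rewrite invr_gt0 exprn_gt0 // ltr0n prime_gt0.
by have := @r_lt1 d d0; rewrite ger0_norm ?powR_ge0.
Qed.

Lemma Xcvg : (fun N : nat => normA p R (fun e => xx e - \sum_(n < N) Y n e)) @ \oo --> (0 : R).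
Proof.
set C := (p%:R : R) `^ (- ratr (h%:R + d)).
set r := (p%:R : R) `^ (- ratr d).
apply: (@squeeze_cvgr _ _ _ _ (fun _ => 0) (geometric C r)); last first.
- exact: cvg_geometric (@r_lt1 d d0).
- exact: cvg_cst.
apply: nearW => N.
have [H0 Hb _] := @normA_bnd p F R pp (fun e => xx e - \sum_(n < N) Y n e) (h%:R + N.+1%:R * d) (@Xtail N).
apply/andP; split => //; apply: le_trans Hb _.
have E : - ratr (h%:R + N.+1%:R * d) = - ratr (h%:R + d) + (- ratr d) * (N%:R : R).
  by rewrite !rmorphD rmorphM /= !ratr_nat mulrSr; ring.
rewrite /geometric /C /r E powRD; last by rewrite pn0 implybT.
by rewrite powRrM powR_mulrn ?powR_ge0.
Qed.

Lemma Xuniq (x' : seq rat -> F) : inA p f x' -> normA p R x' < (p%:R : R) ^- h ->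
  (fun e => x' e - U x' e) = y -> x' = xx.
Proof.
move=> Ha Hn Heq; have [d' [d'0 Hd']] := @gap p F R pp f h x' Ha Hn.
pose D e := x' e - xx e.
have HD : forall e, D e = if size e == f then lam * D (Sm p f h e) else 0.
  move=> e; have E1 := congr1 (fun g => g e) Heq; have E2 := congr1 (fun g => g e) Xeq.
  have E3 : x' e - U x' e = xx e - U xx e by rewrite /= in E1 E2; rewrite E2 E1.
  rewrite /D; rewrite /U !Ueq // in E3 *; case: (size e == f) E3 => E3.
    apply/eqP; rewrite -subr_eq0.
    have -> : x' e - xx e - lam * (x' (Sm p f h e) - xx (Sm p f h e)) =
      (x' e - lam * x' (Sm p f h e)) - (xx e - lam * xx (Sm p f h e)) by ring.
    by rewrite E3 subrr.
  by rewrite !subr0 in E3; rewrite E3 subrr.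
have md0 : 0 < Num.min d d' by rewrite lt_min d0 d'0.
have G := @grow p f F h pp f0 (fun _ => D) (Num.min d d') md0.
have {G} G : forall n e, D e != 0 -> n.+1%:R * Num.min d d' <= wt p e - h%:R.
  apply: G => [e De|n e].
    have [x0|xn] := eqVneq (xx e) 0.
      have : x' e != 0 by move: De; rewrite /D x0 subr0.
      move/Hd'; apply: le_trans; by rewrite lerD2l ge_min lexx orbT.
    move/Xgap: xn; apply: le_trans; by rewrite lerD2l ge_min lexx.
  by rewrite HD => /ifnz [/eqP].
apply: funext => e; apply/eqP; rewrite -subr_eq0; apply/negPn/negP => De.
exact: (@archi_contra (wt p e - h%:R) (Num.min d d') md0 (fun n => G n e De)).
Qed.

Lemma main_all : exists x : seq rat -> F,
    [/\ inA p f x, normA p R x < (p%:R : R) ^- h,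
        (fun e => x e - Uop p f lam h x e) = y &
        (fun N : nat => normA p R
           (fun e => x e - \sum_(n < N) iter n (Uop p f lam h) y e))
          @ \oo --> (0 : R)] /\
    (forall x' : seq rat -> F, inA p f x' -> normA p R x' < (p%:R : R) ^- h ->
       (fun e => x' e - Uop p f lam h x' e) = y -> x' = x).
Proof.
exists xx; split; [split|].
- exact: XinA.
- exact: Xnorm.
- exact: Xeq.
- exact: Xcvg.
- exact: Xuniq.
Qed.

End Main.

Theorem lemma4p6 (p f : nat) (F : finFieldType) (R : realType)
    (h : nat) (l0 l1 : F) :
  prime p -> odd p -> (0 < f)%N -> p \in [pchar F] ->
  (h <= p ^ f - 2)%N -> l0 != 0 -> l1 != 0 ->
  forall y : seq rat -> F, inA p f y ->
  normA p R y < (p%:R : R) ^- h ->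
  exists x : seq rat -> F,
    [/\ inA p f x, normA p R x < (p%:R : R) ^- h,
        (fun e => x e - Uop p f (l0 / l1) h x e) = y &
        (fun N : nat => normA p R
           (fun e => x e - \sum_(n < N) iter n (Uop p f (l0 / l1) h) y e))
          @ \oo --> (0 : R)] /\
    (forall x' : seq rat -> F, inA p f x' -> normA p R x' < (p%:R : R) ^- h ->
       (fun e => x' e - Uop p f (l0 / l1) h x' e) = y -> x' = x).
Proof.
move=> pp _ f0 _ _ _ _ y Hy Hny.
have [d [d0 Hd]] := @gap p F R pp f h y Hy Hny.
exact: (@main_all p f F R h (l0 / l1) y d pp f0 Hy d0 Hd).
Qed.
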